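(* Let $(X,d)$ be a pointed metric space and let $((x_i,y_i))_{i\in I}$ be a Lipschitz interpolating family in $\widetilde X$ for $\mathrm{Lip}_0(X)$ with Lipschitz interpolation constant $M$, and let $T$ be its Lipschitz interpolating operator. Assume that there exists a bounded linear operator $R:\ell_\infty(I)\to\mathrm{Lip}_0(X)$ with $\|R\|\leq M$ and $T\circ R=\mathrm{Id}_{\ell_\infty(I)}$. Then there exists a Beurling set $(f_i)_{i\in I}$ of functions in $\mathrm{Lip}_0(X)$ for $((x_i,y_i))_{i\in I}$.
   Context: All spaces are real. $(X,d)$ is a metric space with base point $0$, $\widetilde{X}=\{(x,y)\in X\times X: x\neq y\}$. $\mathrm{Lip}_0(X)$ is the Banach space of Lipschitz $f:X\to\mathbb{R}$ with $f(0)=0$, normed by $\|f\|=\sup_{(x,y)\in\widetilde X}|f(x)-f(y)|/d(x,y)$. For a family $((x_i,y_i))_{i\in I}$ in $\widetilde X$, its Lipschitz interpolating operator is $T:\mathrm{Lip}_0(X)\to\ell_\infty(I)$, $T(f)=\big((f(x_i)-f(y_i))/d(x_i,y_i)\big)_{i\in I}$; the family is Lipschitz interpolating for $\mathrm{Lip}_0(X)$ if $T$ is surjective, and then its Lipschitz interpolation constant is $M=\inf\{K\geq 1: \forall \alpha\in\ell_\infty(I), \|\alpha\|_\infty\le1,\ \exists f\in\mathrm{Lip}_0(X),\ \|f\|\le K,\ T(f)=\alpha\}$. A Beurling set of functions in $\mathrm{Lip}_0(X)$ for such a family (with constant $M$) is a family $(f_i)_{i\in I}$ of functions $f_i:X\to\mathbb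 R$ with $f_i(0)=0$ for all $i$, $(f_i(x_j)-f_i(y_j))/d(x_j,y_j)=\delta_{ij}$ (Kronecker delta) for all $i,j\in I$, and $\sup_{(x,y)\in\widetilde X}\sum_{i\in I}|f_i(x)-f_i(y)|/d(x,y)\leq M$. *)

(* Defs.v *)
From Stdlib Require Import Reals List.
Open Scope R_scope.

Definition is_metric {X : Type} (d : X -> X -> R) : Prop :=
  (forall x y, 0 <= d x y) /\
  (forall x y, d x y = 0 <-> x = y) /\
  (forall x y, d x y = d y x) /\
  (forall x y z, d x z <= d x y + d y z).

Definition lip_le {X : Type} (d : X -> X -> R) (f : X -> R) (K : R) : Prop :=
  forall x y, x <> y -> Rabs (f x - f y) / d x y <= K.

Definition Lip0 {X : Type} (d : X -> X -> R) (x0 : X) (f : X -> R) : Prop :=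
  f x0 = 0 /\ exists K, lip_le d f K.

Definition sup_le {I : Type} (alpha : I -> R) (c : R) : Prop :=
  forall i, Rabs (alpha i) <= c.

Definition linfty {I : Type} (alpha : I -> R) : Prop := exists c, sup_le alpha c.

Definition interp_op {X I : Type} (d : X -> X -> R) (xs ys : I -> X)
  (f : X -> R) : I -> R :=
  fun i => (f (xs i) - f (ys i)) / d (xs i) (ys i).

Definition lip_interpolating {X I : Type} (d : X -> X -> R) (x0 : X)
  (xs ys : I -> X) : Prop :=
  (forall i, xs i <> ys i) /\
  forall alpha, linfty alpha ->
    exists f, Lip0 d x0 f /\ interp_op d xs ys f = alpha.

Definition interp_admissible {X I : Type} (d : X -> X -> R) (x0 : X)
  (xs ys : I -> X) (K : R) : Prop :=
  1 <= K /\
  forall alpha, sup_le alpha 1 ->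
    exists f, Lip0 d x0 f /\ lip_le d f K /\ interp_op d xs ys f = alpha.

Definition interp_constant {X I : Type} (d : X -> X -> R) (x0 : X)
  (xs ys : I -> X) (M : R) : Prop :=
  (forall K, interp_admissible d x0 xs ys K -> M <= K) /\
  (forall m, (forall K, interp_admissible d x0 xs ys K -> m <= K) -> m <= M).

Definition bounded_linear_le {X I : Type} (d : X -> X -> R) (x0 : X)
  (Rop : (I -> R) -> X -> R) (M : R) : Prop :=
  (forall alpha, linfty alpha -> Lip0 d x0 (Rop alpha)) /\
  (forall alpha beta (a : R), linfty alpha -> linfty beta ->
     Rop (fun i => a * alpha i + beta i) = (fun x => a * Rop alpha x + Rop beta x)) /\
  (forall alpha c, sup_le alpha c -> lip_le d (Rop alpha) (M * c)).

Definition lsum {I : Type} (F : list I) (g : I -> R) : R :=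
  fold_right (fun i acc => g i + acc) 0 F.

(** The (possibly infinite) sum of nonnegative terms sum_i |f_i x - f_i y|/d(x,y)
    is <= M iff every finite partial sum (over distinct indices) is <= M. *)
Definition beurling_set {X I : Type} (d : X -> X -> R) (x0 : X)
  (xs ys : I -> X) (M : R) (f : I -> X -> R) : Prop :=
  (forall i, f i x0 = 0) /\
  (forall i, (f i (xs i) - f i (ys i)) / d (xs i) (ys i) = 1) /\
  (forall i j, i <> j -> (f i (xs j) - f i (ys j)) / d (xs j) (ys j) = 0) /\
  (forall x y, x <> y -> forall F : list I, NoDup F ->
     lsum F (fun i => Rabs (f i x - f i y) / d x y) <= M).

(* Main.v *)
Require Import Defs.
From Stdlib Require Import Reals List Lra.
From Stdlib Require Import ClassicalDescription FunctionalExtensionality.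
Open Scope R_scope.

Definition ev {I : Type} (j i : I) : R :=
  if excluded_middle_informative (i = j) then 1 else 0.

Definition gF {I : Type} (s : I -> R) (F : list I) : I -> R :=
  fun i => lsum F (fun j => s j * ev j i).

Lemma ev_bound {I : Type} (j i : I) : Rabs (ev j i) <= 1.
Proof. unfold ev; destruct excluded_middle_informative; try rewrite Rabs_R1; try rewrite Rabs_R0; lra. Qed.

Lemma gF_linfty {I : Type} (s : I -> R) (F : list I) :
  (forall j, Rabs (s j) <= 1) -> sup_le (gF s F) (INR (length F)).
Proof.
  intros Hs i; induction F as [|j F IH]; unfold gF in *; simpl.
  - rewrite Rabs_R0; lra.
  - replace (match length F with 0%nat => 1 | S _ => INR (length F) + 1 end) with (INR (length F) + 1) by (destruct (length F); simpl; lra). eapply Rle_trans; [apply Rabs_triang|].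
    rewrite Rabs_mult. pose proof (ev_bound j i). pose proof (Hs j).
    assert (Rabs (s j) * Rabs (ev j i) <= 1).
    { replace 1 with (1*1) by ring. apply Rmult_le_compat; auto using Rabs_pos. }
    lra.
Qed.

Lemma gF_notin {I : Type} (s : I -> R) (F : list I) i :
  ~ In i F -> gF s F i = 0.
Proof.
  induction F as [|j F IH]; unfold gF in *; simpl; intros H; [reflexivity|].
  rewrite IH by tauto. unfold ev; destruct excluded_middle_informative; [exfalso; auto|]. ring.
Qed.

Lemma gF_sup {I : Type} (s : I -> R) (F : list I) :
  (forall j, Rabs (s j) <= 1) -> NoDup F -> sup_le (gF s F) 1.
Proof.
  intros Hs HF i; induction HF as [|j F Hj HF IH]; unfold gF in *; simpl.
  - rewrite Rabs_R0; lra.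
  - unfold ev at 1; destruct excluded_middle_informative as [e|n].
    + subst. pose proof (gF_notin s F j Hj). unfold gF in H. rewrite H.
      rewrite Rmult_1_r, Rplus_0_r. auto.
    + rewrite Rmult_0_r, Rplus_0_l. auto.
Qed.

Lemma lsum_div {I : Type} (F : list I) (g : I -> R) D :
  lsum F (fun i => g i / D) = lsum F g / D.
Proof. induction F; simpl; unfold Rdiv in *; [ring|]. rewrite IHF; ring. Qed.

Lemma lsum_ext {I : Type} (F : list I) (g h : I -> R) :
  (forall i, g i = h i) -> lsum F g = lsum F h.
Proof. intros H; induction F; simpl; [reflexivity|]. rewrite IHF, H; reflexivity. Qed.

Theorem theorem3p10 (X I : Type) (d : X -> X -> R) (x0 : X)
  (xs ys : I -> X) (M : R) (Rop : (I -> R) -> X -> R) :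
  is_metric d ->
  lip_interpolating d x0 xs ys ->
  interp_constant d x0 xs ys M ->
  bounded_linear_le d x0 Rop M ->
  (forall alpha, linfty alpha -> interp_op d xs ys (Rop alpha) = alpha) ->
  exists f : I -> X -> R, beurling_set d x0 xs ys M f.
Proof.
  intros [Hd0 [Hdeq [Hdsym Htri]]] Hint Hconst [HL0 [Hlin Hbd]] HTR.
  assert (Hev : forall j : I, linfty (ev j)) by (intro j; exists 1; intro i; apply ev_bound).
  assert (H0 : forall x, Rop (fun _ => 0) x = 0).
  { intro x. assert (Hl : linfty (fun _ : I => 0)) by (exists 0; intro; rewrite Rabs_R0; lra).
    pose proof (Hlin _ _ 1 Hl Hl) as E.
    assert (Z : (fun _ : I => 1 * 0 + 0) = (fun _ : I => 0))
      by (apply functional_extensionality; intro; ring).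
    cbv beta in E. rewrite Z in E.
    apply (f_equal (fun f => f x)) in E. cbv beta in E. lra. }
  exists (fun i => Rop (ev i)). split; [|split; [|split]].
  - intro i. apply (HL0 _ (Hev i)).
  - intro i. pose proof (HTR _ (Hev i)) as E. apply (f_equal (fun f => f i)) in E.
    unfold interp_op in E. rewrite E. unfold ev; destruct excluded_middle_informative; congruence.
  - intros i j Hij. pose proof (HTR _ (Hev i)) as E. apply (f_equal (fun f => f j)) in E.
    unfold interp_op in E. rewrite E. unfold ev; destruct excluded_middle_informative; congruence.
  - intros x y Hxy F HF.
    set (A := fun j => Rop (ev j) x - Rop (ev j) y).
    set (s := fun j => if Rle_dec 0 (A j) then 1 else -1).
    assert (Hs : forall j, Rabs (s j) <= 1).
    { intro j; unfold s; destruct Rle_dec; unfold Rabs; destruct Rcase_abs; lra. }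
    assert (HsA : forall j, Rabs (A j) = s j * A j).
    { intro j; unfold s; destruct Rle_dec.
      - rewrite Rabs_right; lra.
      - rewrite Rabs_left; lra. }
    assert (Hpt : forall z, Rop (gF s F) z = lsum F (fun j => s j * Rop (ev j) z)).
    { intro z. clear HF. induction F as [|j F IH].
      - apply H0.
      - change (gF s (j :: F)) with (fun i => s j * ev j i + gF s F i).
        rewrite (Hlin _ _ (s j) (Hev j) (ex_intro _ _ (gF_linfty s F Hs))).
        simpl. rewrite IH. reflexivity. }
    assert (Hdpos : 0 < d x y).
    { destruct (Hd0 x y) as [h|h]; auto. exfalso; apply Hxy, Hdeq; auto. }
    rewrite (lsum_ext F _ (fun j => s j * A j / d x y)).
    2:{ intro j. rewrite <- HsA. reflexivity. }
    rewrite lsum_div.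
    assert (E : lsum F (fun j => s j * A j) = Rop (gF s F) x - Rop (gF s F) y).
    { rewrite !Hpt. unfold A. clear. induction F; simpl; [ring|]. rewrite IHF; ring. }
    rewrite E.
    pose proof (Hbd _ _ (gF_sup s F Hs HF) x y Hxy) as B.
    rewrite Rmult_1_r in B. eapply Rle_trans; [|exact B].
    unfold Rdiv. apply Rmult_le_compat_r.
    + left; apply Rinv_0_lt_compat; auto.
    + apply Rle_abs.
Qed.
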